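(* Let $d\ge 1$ and let $X_1, X_2 \subset \mathbb{R}^d$ be finite nonempty sets of signals. For $\mathbf{x}=(x_1,\dots,x_d)$ and $0\le s\le d-1$ let $\mathbf{x}^s=(x_{s+1},x_{s+2},\dots,x_d,x_1,\dots,x_s)$ be its circular shift by $s$, and let $S_i=\{\mathbf{x}^s : \mathbf{x}\in X_i,\ 0\le s\le d-1\}$ for $i=1,2$. Let $f_{dc}(\mathbf{x})=\frac{1}{\sqrt d}\sum_{i=1}^d x_i$ and $\bar{\mathbf{w}}=\frac{1}{\sqrt d}\mathbf{1}_d$. Then $S_1$ and $S_2$ are linearly separable if and only if $\max_{\mathbf{x}_1\in S_1} f_{dc}(\mathbf{x}_1) < \min_{\mathbf{x}_2\in S_2} f_{dc}(\mathbf{x}_2)$ or $\max_{\mathbf{x}_2\in S_2} f_{dc}(\mathbf{x}_2) < \min_{\mathbf{x}_1\in S_1} f_{dc}(\mathbf{x}_1)$. Furthermore, if they are linearly separable and the first inequality holds, then the maximum margin equals $\min_{\mathbf{x}_2\in S_2} f_{dc}(\mathbf{x}_2)-\max_{\mathbf{x}_1\in S_1} f_{dc}(\mathbf{x}_1)$ (and symmetrically, with the roles of $S_1,S_2$ exchanged, if the second inequality holds), and this maximum margin is attained by a separating hyperplane with normal vector $\bar{\mathbf{w}}$.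
   Context: Two finite sets $A,B\subset\mathbb{R}^d$ are linearly separable if there exist a unit vector $\mathbf{w}\in\mathbb{R}^d$ and a threshold $T\in\mathbb{R}$ such that $\mathbf{w}^T\mathbf{a}<T<\mathbf{w}^T\mathbf{b}$ for all $\mathbf{a}\in A,\mathbf{b}\in B$, or the same with $A$ and $B$ exchanged. For a unit vector $\mathbf{w}$ with $A$ on the low side, the margin of $\mathbf{w}$ is $\min_{\mathbf{b}\in B}\mathbf{w}^T\mathbf{b}-\max_{\mathbf{a}\in A}\mathbf{w}^T\mathbf{a}$; the maximum margin is the supremum of this quantity over unit vectors $\mathbf{w}$. $\mathbf{1}_d$ denotes the all-ones vector in $\mathbb{R}^d$. *)

(* Defs.v *)
From HB Require Import structures.
From mathcomp Require Import all_boot all_order all_algebra.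
From mathcomp Require Import boolp classical_sets reals.
Set Implicit Arguments. Unset Strict Implicit. Unset Printing Implicit Defensive.
Import Order.TTheory GRing.Theory Num.Theory.
Local Open Scope ring_scope.
Local Open Scope classical_set_scope.

Section Defs.
Variable R : realType.
Variable d : nat.

Definition dotv (w x : 'rV[R]_d) : R := \sum_(i < d) w 0 i * x 0 i.

Definition unitv (w : 'rV[R]_d) : Prop := dotv w w = 1.

Lemma ord_pos (j : 'I_d) : (0 < d)%N.
Proof. exact: leq_ltn_trans (leq0n j) (ltn_ord j). Qed.

Definition circ_idx (s : nat) (j : 'I_d) : 'I_d :=
  Ordinal (ltn_pmod (j + s) (ord_pos j)).

(* circular shift x^s = (x_{s+1},...,x_d,x_1,...,x_s), i.e. (x^s)_j = x_{(j+s) mod d}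
   with 0-based indices *)
Definition cshift (x : 'rV[R]_d) (s : nat) : 'rV[R]_d :=
  \row_(j < d) x 0 (circ_idx s j).

Definition shifts (X : seq 'rV[R]_d) : seq 'rV[R]_d :=
  [seq cshift x s | x <- X, s <- iota 0 d].

(* maximum / minimum of f over a nonempty finite list (value 0 on the empty list,
   never used) *)
Definition maxf (f : 'rV[R]_d -> R) (s : seq 'rV[R]_d) : R :=
  if s is x :: s' then foldr (fun y m => Num.max (f y) m) (f x) s' else 0.
Definition minf (f : 'rV[R]_d -> R) (s : seq 'rV[R]_d) : R :=
  if s is x :: s' then foldr (fun y m => Num.min (f y) m) (f x) s' else 0.

Definition fdc (x : 'rV[R]_d) : R := (Num.sqrt (d%:R))^-1 * \sum_(i < d) x 0 i.

Definition wbar : 'rV[R]_d := \row_(i < d) (Num.sqrt (d%:R))^-1.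

Definition separates (w : 'rV[R]_d) (T : R) (A B : seq 'rV[R]_d) : Prop :=
  (forall a, a \in A -> dotv w a < T) /\ (forall b, b \in B -> T < dotv w b).

Definition lin_sep (A B : seq 'rV[R]_d) : Prop :=
  exists w T, unitv w /\ (separates w T A B \/ separates w T B A).

Definition margin (w : 'rV[R]_d) (A B : seq 'rV[R]_d) : R :=
  minf (dotv w) B - maxf (dotv w) A.

Definition max_margin (A B : seq 'rV[R]_d) : R :=
  sup [set margin w A B | w in unitv].

End Defs.

(* Main.v *)
Require Import Defs.
From HB Require Import structures.
From mathcomp Require Import all_boot all_order all_algebra.
From mathcomp Require Import boolp classical_sets reals.
From mathcomp Require Import ring lra.
Set Implicit Arguments. Unset Strict Implicit.
Import Order.TTheory GRing.Theory Num.Theory.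
Local Open Scope ring_scope.

Section Aux.
Variable R : realType.
Variable d : nat.
Hypothesis d_gt0 : (0 < d)%N.
Implicit Types (X A B : seq 'rV[R]_d) (x w : 'rV[R]_d) (f : 'rV[R]_d -> R) (s : seq 'rV[R]_d).

Lemma maxf_ub f s y : y \in s -> f y <= maxf f s.
Proof.
case: s => [//|x s]; rewrite /= inE => /orP[/eqP->|].
  by elim: s => [|z s IH] //=; rewrite le_max IH orbT.
elim: s => [//|z s IH]; rewrite inE => /orP[/eqP->|/IH H] /=.
  by rewrite le_max lexx.
by rewrite le_max H orbT.
Qed.

Lemma minf_lb f s y : y \in s -> minf f s <= f y.
Proof.
case: s => [//|x s]; rewrite /= inE => /orP[/eqP->|].
  by elim: s => [|z s IH] //=; rewrite ge_min IH orbT.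
elim: s => [//|z s IH]; rewrite inE => /orP[/eqP->|/IH H] /=.
  by rewrite ge_min lexx.
by rewrite ge_min H orbT.
Qed.

Lemma maxf_in f s : s != [::] -> exists2 y, y \in s & maxf f s = f y.
Proof.
case: s => [//|x s] _ /=.
elim: s => [|z s IH] /=; first by exists x; rewrite ?inE ?eqxx.
case: IH => y Hy ->.
case: (leP (f z) (f y)) => H.
  exists y => //; by rewrite !inE in Hy *; case/orP: Hy => ->; rewrite ?orbT.
by exists z; rewrite // !inE eqxx orbT.
Qed.

Lemma minf_in f s : s != [::] -> exists2 y, y \in s & minf f s = f y.
Proof.
case: s => [//|x s] _ /=.
elim: s => [|z s IH] /=; first by exists x; rewrite ?inE ?eqxx.
case: IH => y Hy ->.
case: (leP (f y) (f z)) => H.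
  exists y => //; by rewrite !inE in Hy *; case/orP: Hy => ->; rewrite ?orbT.
by exists z; rewrite // !inE eqxx orbT.
Qed.

Lemma circ_val k (j : 'I_d) : nat_of_ord (circ_idx k j) = ((j + k) %% d)%N.
Proof. by []. Qed.

Lemma sum_circ_j (F : 'I_d -> R) k : \sum_(j < d) F (circ_idx k j) = \sum_(j < d) F j.
Proof.
symmetry; apply: (reindex_inj (h := circ_idx k)).
move=> i j /(congr1 val); rewrite /= => /eqP; rewrite eqn_modDr => /eqP.
by rewrite !modn_small // => /val_inj.
Qed.

Lemma sum_circ_s (F : 'I_d -> R) (j : 'I_d) :
  \sum_(k < d) F (circ_idx k j) = \sum_(i < d) F i.
Proof.
symmetry; apply: (reindex_inj (h := fun k : 'I_d => circ_idx k j)).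
move=> i k /(congr1 val); rewrite /= => /eqP; rewrite eqn_modDl => /eqP.
by rewrite !modn_small // => /val_inj.
Qed.

Local Notation fd := (@fdc R d).
Local Notation sq := (Num.sqrt (d%:R : R)).

Lemma sq_gt0 : 0 < sq.
Proof. by rewrite sqrtr_gt0 ltr0n. Qed.

Lemma sq_sq : sq * sq = d%:R.
Proof. by rewrite -expr2 sqr_sqrtr // ler0n. Qed.

Lemma sum_fdc x : \sum_(i < d) x 0 i = sq * fd x.
Proof. by rewrite /fdc mulrA mulfV ?mul1r // gt_eqF // sq_gt0. Qed.

Lemma fdc_cshift x k : fd (cshift x k) = fd x.
Proof.
rewrite /fdc; congr (_ * _).
rewrite (eq_bigr (fun j => x 0 (circ_idx k j))) ?(sum_circ_j (fun j => x 0 j)) //.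
by move=> j _; rewrite mxE.
Qed.

Lemma sum_dot_shifts w x :
  \sum_(k < d) dotv w (cshift x k) = (\sum_(i < d) w 0 i) * (\sum_(i < d) x 0 i).
Proof.
rewrite /dotv.
rewrite (eq_bigr (fun k : 'I_d => \sum_(i < d) w 0 i * x 0 (circ_idx k i))); last first.
  by move=> k _; apply: eq_bigr => i _; rewrite mxE.
rewrite exchange_big /= mulr_suml; apply: eq_bigr => j _.
by rewrite -mulr_sumr (sum_circ_s (fun i => x 0 i) j).
Qed.

Lemma mem_shifts x X k : x \in X -> (k < d)%N -> cshift x k \in shifts X.
Proof. by move=> Hx Hk; apply: allpairs_f => //; rewrite mem_iota. Qed.

Lemma shiftsP y X : y \in shifts X -> exists x k, x \in X /\ y = cshift x k.
Proof. by case/allpairsP => [[x k] /= [Hx _ ->]]; exists x, k. Qed.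

Lemma shifts_nil X : X != [::] -> shifts X != [::].
Proof.
case: X => [//|x X] _; apply/eqP => E.
have := @mem_shifts x (x :: X) 0 (mem_head _ _) d_gt0.
by rewrite E.
Qed.

Lemma dot_wbar x : dotv (wbar R d) x = fd x.
Proof. by rewrite /dotv /fdc mulr_sumr; apply: eq_bigr => i _; rewrite mxE. Qed.

Lemma unit_wbar : unitv (wbar R d).
Proof.
rewrite /unitv dot_wbar /fdc.
rewrite (eq_bigr (fun _ => sq^-1)); last by move=> i _; rewrite mxE.
rewrite sumr_const card_ord -[sq^-1 *+ d]mulr_natr mulrA -invfM sq_sq mulVf //.
by rewrite pnatr_eq0 -lt0n.
Qed.

Lemma sum_le_sq w : unitv w -> \sum_(i < d) w 0 i <= sq.
Proof.
rewrite /unitv /dotv => Hw.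
set c := sq^-1.
have c0 : 0 < c by rewrite invr_gt0 sq_gt0.
have H : 0 <= \sum_(i < d) (w 0 i - c) ^+ 2 by apply: sumr_ge0 => i _; exact: sqr_ge0.
rewrite (eq_bigr (fun i => w 0 i * w 0 i + ((- (2 * c)) * w 0 i + c ^+ 2))) in H; last first.
  by move=> i _; ring.
rewrite big_split big_split /= -mulr_sumr sumr_const card_ord Hw in H.
have Hc : c ^+ 2 *+ d = 1.
  by rewrite -mulr_natr /c exprVn -[sq ^+ 2]/(sq * sq) sq_sq mulVf // pnatr_eq0 -lt0n.
rewrite Hc in H.
have H1 : c * \sum_(i < d) w 0 i <= 1 by lra.
have -> : \sum_(i < d) w 0 i = sq * (c * \sum_(i < d) w 0 i).
  by rewrite mulrA /c mulfV ?mul1r // gt_eqF // sq_gt0.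
by rewrite -{2}[sq]mulr1 ler_pM2l // sq_gt0.
Qed.

Lemma fdc_lt x y : (fd x < fd y) = (\sum_(i < d) x 0 i < \sum_(i < d) y 0 i).
Proof. by rewrite /fdc ltr_pM2l // invr_gt0 sq_gt0. Qed.

Lemma sum_lt_sep (T : R) w x A : x \in A ->
  (forall a, a \in shifts A -> dotv w a < T) ->
  (\sum_(i < d) w 0 i) * (\sum_(i < d) x 0 i) < d%:R * T.
Proof.
move=> Hx H; rewrite -sum_dot_shifts.
have -> : d%:R * T = \sum_(k < d) T by rewrite sumr_const card_ord mulr_natl.
apply: ltr_sum; first by apply/hasP; exists (Ordinal d_gt0); rewrite ?mem_index_enum.
by move=> k _; apply: H; apply: mem_shifts.
Qed.

Lemma sum_gt_sep (T : R) w x A : x \in A ->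
  (forall a, a \in shifts A -> T < dotv w a) ->
  d%:R * T < (\sum_(i < d) w 0 i) * (\sum_(i < d) x 0 i).
Proof.
move=> Hx H; rewrite -sum_dot_shifts.
have -> : d%:R * T = \sum_(k < d) T by rewrite sumr_const card_ord mulr_natl.
apply: ltr_sum; first by apply/hasP; exists (Ordinal d_gt0); rewrite ?mem_index_enum.
by move=> k _; apply: H; apply: mem_shifts.
Qed.

Lemma maxf_shifts X : X != [::] -> exists2 x, x \in X & maxf fd (shifts X) = fd x.
Proof.
move=> /shifts_nil /(maxf_in fd) [y /shiftsP [x [k [Hx ->]]] ->].
by exists x; rewrite ?fdc_cshift.
Qed.

Lemma minf_shifts X : X != [::] -> exists2 x, x \in X & minf fd (shifts X) = fd x.
Proof.
move=> /shifts_nil /(minf_in fd) [y /shiftsP [x [k [Hx ->]]] ->].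
by exists x; rewrite ?fdc_cshift.
Qed.

Lemma sep_dir A B w T : A != [::] -> B != [::] ->
  separates w T (shifts A) (shifts B) ->
  maxf fd (shifts A) < minf fd (shifts B) \/ maxf fd (shifts B) < minf fd (shifts A).
Proof.
move=> nA nB [HA HB].
have key x y : x \in A -> y \in B ->
    (\sum_(i < d) w 0 i) * (\sum_(i < d) x 0 i) < (\sum_(i < d) w 0 i) * (\sum_(i < d) y 0 i).
  by move=> Hx Hy; apply: lt_trans (sum_lt_sep Hx HA) (sum_gt_sep Hy HB).
have [x1 Hx1 ->] := maxf_shifts nA.
have [y1 Hy1 ->] := minf_shifts nB.
have [y2 Hy2 ->] := maxf_shifts nB.
have [x2 Hx2 ->] := minf_shifts nA.
rewrite !fdc_lt.
case: (ltgtP (\sum_(i < d) w 0 i) 0) => Hs.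
- by right; rewrite -(ltr_nM2l Hs); apply: key.
- by left; rewrite -(ltr_pM2l Hs); apply: key.
- by have := key _ _ Hx1 Hy1; rewrite Hs !mul0r ltxx.
Qed.

Lemma sep_wbar A B : maxf fd (shifts A) < minf fd (shifts B) ->
  separates (wbar R d) ((maxf fd (shifts A) + minf fd (shifts B)) / 2) (shifts A) (shifts B).
Proof.
move=> H; split => a Ha; rewrite dot_wbar.
  by have := maxf_ub fd Ha; lra.
by have := minf_lb fd Ha; lra.
Qed.

Lemma margin_wbar A B :
  margin (wbar R d) A B = minf fd B - maxf fd A.
Proof.
rewrite /margin; by have -> : dotv (wbar R d) = fd by apply/funext => x; rewrite dot_wbar.
Qed.

Lemma margin_bound A B w : A != [::] -> B != [::] -> unitv w ->
  maxf fd (shifts A) < minf fd (shifts B) ->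
  margin w (shifts A) (shifts B) <= minf fd (shifts B) - maxf fd (shifts A).
Proof.
move=> nA nB Hw.
have [x1 Hx1 ->] := maxf_shifts nA.
have [x2 Hx2 ->] := minf_shifts nB => Hlt.
rewrite /margin.
set m := minf (dotv w) (shifts B).
set M := maxf (dotv w) (shifts A).
set sw := \sum_(i < d) w 0 i.
have h2 : d%:R * m <= sw * (\sum_(i < d) x2 0 i).
  rewrite -sum_dot_shifts.
  have -> : d%:R * m = \sum_(k < d) m by rewrite sumr_const card_ord mulr_natl.
  by apply: ler_sum => k _; apply: minf_lb; apply: mem_shifts.
have h1 : sw * (\sum_(i < d) x1 0 i) <= d%:R * M.
  rewrite -sum_dot_shifts.
  have -> : d%:R * M = \sum_(k < d) M by rewrite sumr_const card_ord mulr_natl.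
  by apply: ler_sum => k _; apply: maxf_ub; apply: mem_shifts.
rewrite !sum_fdc in h1 h2.
have hsw : sw <= sq by apply: sum_le_sq.
have hD : 0 <= fd x2 - fd x1 by rewrite subr_ge0 ltW.
have h3 : sw * (sq * fd x2) - sw * (sq * fd x1) <= sq * (sq * (fd x2 - fd x1)).
  have -> : sw * (sq * fd x2) - sw * (sq * fd x1) = sw * (sq * (fd x2 - fd x1)) by ring.
  by apply: ler_wpM2r => //; apply: mulr_ge0 => //; apply: sqrtr_ge0.
rewrite mulrA sq_sq in h3.
have h4 : d%:R * (m - M) <= d%:R * (fd x2 - fd x1).
  rewrite mulrBr; lra.
by rewrite ler_pM2l // in h4; rewrite ltr0n.
Qed.

Lemma max_margin_eq A B : A != [::] -> B != [::] ->
  maxf fd (shifts A) < minf fd (shifts B) ->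
  max_margin (shifts A) (shifts B) = minf fd (shifts B) - maxf fd (shifts A) /\
  margin (wbar R d) (shifts A) (shifts B) = max_margin (shifts A) (shifts B).
Proof.
move=> nA nB Hlt.
set E := [set margin w (shifts A) (shifts B) | w in @unitv R d]%classic.
set D := minf fd (shifts B) - maxf fd (shifts A).
have DE : E D by exists (wbar R d); [exact: unit_wbar | exact: margin_wbar].
have ubD : ubound E D by move=> y [w Hw <-]; apply: margin_bound.
have eq : sup E = D.
  apply/eqP; rewrite eq_le; apply/andP; split.
    by apply: ge_sup => //; exists D.
  by apply: ub_le_sup => //; exists D.
by rewrite /max_margin -/E eq margin_wbar.
Qed.
End Aux.

Theorem theorem1 (R : realType) (d : nat) (X1 X2 : seq 'rV[R]_d) :
  (0 < d)%N -> X1 != [::] -> X2 != [::] ->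
  let S1 := shifts X1 in
  let S2 := shifts X2 in
  (lin_sep S1 S2 <->
     (maxf (@fdc R d) S1 < minf (@fdc R d) S2 \/
      maxf (@fdc R d) S2 < minf (@fdc R d) S1)) /\
  (lin_sep S1 S2 -> maxf (@fdc R d) S1 < minf (@fdc R d) S2 ->
     max_margin S1 S2 = minf (@fdc R d) S2 - maxf (@fdc R d) S1 /\
     margin (wbar R d) S1 S2 = max_margin S1 S2 /\
     (exists T, separates (wbar R d) T S1 S2)) /\
  (lin_sep S1 S2 -> maxf (@fdc R d) S2 < minf (@fdc R d) S1 ->
     max_margin S2 S1 = minf (@fdc R d) S1 - maxf (@fdc R d) S2 /\
     margin (wbar R d) S2 S1 = max_margin S2 S1 /\
     (exists T, separates (wbar R d) T S2 S1)).
Proof.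
move=> d0 n1 n2 S1 S2; split; [|split].
- split.
    case=> w [T [_ [H|H]]]; first by have := sep_dir d0 n1 n2 H.
    by case: (sep_dir d0 n2 n1 H) => ?; [right|left].
  case=> H.
    exists (wbar R d), ((maxf (@fdc R d) S1 + minf (@fdc R d) S2) / 2).
    by split; [exact: unit_wbar | left; apply: sep_wbar].
  exists (wbar R d), ((maxf (@fdc R d) S2 + minf (@fdc R d) S1) / 2).
  by split; [exact: unit_wbar | right; apply: sep_wbar].
- move=> _ H; have [E1 E2] := max_margin_eq d0 n1 n2 H.
  by split=> //; split=> //; eexists; apply: sep_wbar.
- move=> _ H; have [E1 E2] := max_margin_eq d0 n2 n1 H.
  by split=> //; split=> //; eexists; apply: sep_wbar.
Qed.
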